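(* For every permutation graph $G$, $\operatorname{box}(G)\le 2\Delta(G)+1$, where $\Delta(G)$ is the maximum degree of $G$.
   Context: For a permutation $\pi$ of $\{1,\dots,n\}$, the graph $G[\pi]$ has vertex set $\{1,\dots,n\}$ and an edge $ij$ iff $(i-j)(\pi^{-1}(i)-\pi^{-1}(j))<0$. A graph is a permutation graph if it is isomorphic to $G[\pi]$ for some permutation $\pi$. The boxicity $\operatorname{box}(G)$ is the minimum $b$ such that $G$ is the intersection graph of axis-parallel boxes in $\mathbb{R}^b$ (products of $b$ closed intervals), one box per vertex. *)

(* Defs.v *)
From HB Require Import structures.
From mathcomp Require Import all_boot all_order all_algebra all_fingroup.
From Stdlib Require Import Rdefinitions.
From mathcomp Require Import Rstruct.
Set Implicit Arguments. Unset Strict Implicit. Unset Printing Implicit Defensive.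
Import Order.TTheory GRing.Theory Num.Theory.
Local Open Scope ring_scope.

(* Edge relation of G[pi] on vertex set 'I_n (0-indexed version of {1..n}):
   i ~ j iff (i - j)(pi^-1 i - pi^-1 j) < 0, i.e. i <> j and the order of i,j
   is reversed by pi^-1. *)
Definition perm_edge (n : nat) (pi : 'S_n) : rel 'I_n :=
  fun i j => (i != j) && (ltn i j != ltn ((pi^-1)%g i) ((pi^-1)%g j)).

Definition is_permutation_graph (V : finType) (adj : rel V) : Prop :=
  exists n (pi : 'S_n) (f : V -> 'I_n),
    bijective f /\ forall u v, adj u v = perm_edge pi (f u) (f v).

Definition degree (V : finType) (adj : rel V) (v : V) : nat := #|[set w | adj v w]|.
Definition max_degree (V : finType) (adj : rel V) : nat := \max_(v : V) degree adj v.

Definition box (b : nat) := 'I_b -> (Rdefinitions.R * Rdefinitions.R).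
Definition box_ok (b : nat) (B : box b) : Prop := forall k, ((B k).1 <= (B k).2).
Definition boxes_meet (b : nat) (B1 B2 : box b) : bool :=
  [forall k, ((B1 k).1 <= (B2 k).2) && ((B2 k).1 <= (B1 k).2)].

Definition box_representable (V : finType) (adj : rel V) (b : nat) : Prop :=
  exists B : V -> box b, (forall v, box_ok (B v)) /\
    forall u v, u != v -> (adj u v <-> boxes_meet (B u) (B v)).

Definition boxicity_le (V : finType) (adj : rel V) (k : nat) : Prop :=
  exists b, leq b k /\ box_representable adj b.

(* Main.v *)
Require Import Defs.
From mathcomp Require Import all_boot all_order all_algebra all_fingroup.
From mathcomp Require Import zify.
From Stdlib Require Import Rdefinitions.
From mathcomp Require Import Rstruct.
Set Implicit Arguments. Unset Strict Implicit. Unset Printing Implicit Defensive.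
Import Order.TTheory GRing.Theory Num.Theory.

Definition adjOK (V : finType) (adj : rel V) (pos q : V -> nat) :=
  forall u v, adj u v = (u != v) && ((pos u < pos v) != (q u < q v)).

Lemma adj_symm (V : finType) (adj : rel V) pos q :
  adjOK adj pos q -> injective pos -> injective q -> forall u v, adj u v = adj v u.
Proof.
move=> H ip iq u v; rewrite !H eq_sym; case: eqP => //= ne.
have h1 : pos u != pos v by apply/eqP => /ip /esym.
have h2 : q u != q v by apply/eqP => /iq /esym.
by move: h1 h2; case: (ltngtP (pos u) (pos v)); case: (ltngtP (q u) (q v)).
Qed.

Lemma between (V : finType) (adj : rel V) pos q :
  adjOK adj pos q -> injective pos -> injective q -> forall u v w,
  pos u < pos w < pos v -> adj u v -> adj u w || adj w v.
Proof.
move=> H ip iq u v w /andP [h1 h2]; rewrite !H.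
have nuw : u != w by apply/eqP => E; move: h1; rewrite E ltnn.
have nwv : w != v by apply/eqP => E; move: h2; rewrite E ltnn.
have nuv : u != v by apply/eqP => E; move: h1 h2; rewrite E; lia.
have quw : q u != q w by apply/eqP => /iq E; move: nuw; rewrite E eqxx.
have qwv : q w != q v by apply/eqP => /iq E; move: nwv; rewrite E eqxx.
rewrite nuw nwv nuv h1 h2 (ltn_trans h1 h2) /=.
move: quw qwv; case: (ltngtP (q u) (q w)); case: (ltngtP (q w) (q v)) => //=; lia.
Qed.
Lemma bandwidth (V : finType) (adj : rel V) pos q (n D : nat) :
  adjOK adj pos q -> injective pos -> injective q ->
  (forall w, pos w < n) -> (forall x, x < n -> exists w, pos w = x) ->
  (forall u, #|[set w | adj u w]| <= D) ->
  forall u v, adj u v -> pos u < pos v -> pos v <= pos u + 2 * D.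
Proof.
move=> H ip iq bnd sur deg u v huv ltuv.
pose g x := odflt u [pick w | pos w == x].
have gP x : x < n -> pos (g x) = x.
  move=> /sur [w hw]; rewrite /g; case: pickP => [w' /eqP //|/(_ w)].
  by rewrite hw eqxx.
pose s := [seq g x | x <- iota (pos u).+1 (pos v - pos u)].
have Hs : size s = pos v - pos u by rewrite size_map size_iota.
have inI x : x \in iota (pos u).+1 (pos v - pos u) -> pos u < x <= pos v.
  by rewrite mem_iota; lia.
have us : uniq s.
  rewrite map_inj_in_uniq ?iota_uniq // => x y /inI hx /inI hy E.
  by rewrite -(gP x) ?(leq_ltn_trans _ (bnd v)) ?E ?gP ?(leq_ltn_trans _ (bnd v)) //; case/andP: hx; case/andP: hy.
pose N := [set w | adj u w] :|: [set w | adj v w].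
have sub : {subset s <= enum N}.
  move=> w /mapP [x /inI hx ->]; rewrite mem_enum !inE.
  have hgx := gP x (leq_ltn_trans (proj2 (andP hx)) (bnd v)).
  case: (ltngtP x (pos v)) hx => [hxv|hvx|->] hx.
  - rewrite (adj_symm H ip iq v); apply: (between H ip iq (v:=v)) => //.
    by rewrite hgx hxv; case/andP: hx => ->.
  - by move: hx hvx; lia.
  - have E : g (pos v) = v by apply: ip; rewrite gP.
    by rewrite E huv.
have := uniq_leq_size us sub; rewrite -cardE Hs => h1.
have h2 := (leq_card_setU [set w | adj u w] [set w | adj v w]).1.
have := deg u; have := deg v; move: h1 h2; rewrite /N; lia.
Qed.
Definition Yc (V : finType) (pos : V -> nat) (M c : nat) (w : V) := pos w + M - c.
Definition exL (V : finType) (adj : rel V) pos M c (u : V) :=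
  [exists w, (Yc pos M c w == (Yc pos M c u %/ M) * M) && adj u w].
Definition exR (V : finType) (adj : rel V) pos M c (u : V) :=
  [exists w, (Yc pos M c w == (Yc pos M c u %/ M).+1 * M) && adj u w].
Definition lo (V : finType) (adj : rel V) pos M c (u : V) :=
  if Yc pos M c u %% M == 0 then (Yc pos M c u %/ M).*2 + 2
  else if exL adj pos M c u then (Yc pos M c u %/ M).*2 + 1 else (Yc pos M c u %/ M).*2 + 3.
Definition hi (V : finType) (adj : rel V) pos M c (u : V) :=
  if Yc pos M c u %% M == 0 then (Yc pos M c u %/ M).*2 + 2
  else if exR adj pos M c u then (Yc pos M c u %/ M).*2 + 5 else (Yc pos M c u %/ M).*2 + 3.

Lemma mono1 M a b : a < b -> a * M + M <= b * M.
Proof. by move=> h; have := leq_mul2r M a.+1 b; rewrite h orbT mulSn addnC => ->. Qed.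

Lemma lo_hi (V : finType) (adj : rel V) pos M c u : lo adj pos M c u <= hi adj pos M c u.
Proof. rewrite /lo /hi; case: ifP => _; first by []. by case: ifP; case: ifP; lia. Qed.

Lemma Yinj (V : finType) (pos : V -> nat) M c :
  c <= M -> injective pos -> injective (Yc pos M c).
Proof. by move=> hc ip w1 w2; rewrite /Yc => E; apply: ip; lia. Qed.

Lemma meetB (V : finType) (adj : rel V) pos q M c :
  0 < M -> c <= M -> adjOK adj pos q -> injective pos -> injective q ->
  forall u v, Yc pos M c u %% M = 0 -> u != v ->
  lo adj pos M c u <= hi adj pos M c v -> lo adj pos M c v <= hi adj pos M c u ->
  adj u v.
Proof.
move=> M0 cM H ip iq u v cu nuv.
have YI := Yinj cM ip.
rewrite /lo /hi cu eqxx.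
have eu := divn_eq (Yc pos M c u) M; have ev := divn_eq (Yc pos M c v) M.
have rv := ltn_pmod (Yc pos M c v) M0.
case: eqP => cv.
  move=> h1 h2; have E : Yc pos M c u = Yc pos M c v.
    by rewrite eu ev cu cv; have -> : Yc pos M c u %/ M = Yc pos M c v %/ M by lia.
  by move: nuv; rewrite (YI _ _ E) eqxx.
have key : forall w, Yc pos M c w = Yc pos M c u -> adj v w -> adj u v.
  by move=> w /YI -> aw; rewrite (adj_symm H ip iq).
rewrite /exL /exR.
case: existsP => [[w /andP [/eqP Ew aw]]|_]; case: existsP => [[w' /andP [/eqP Ew' aw']]|_] h1 h2.
- have [E|E] : Yc pos M c u %/ M = Yc pos M c v %/ M \/ Yc pos M c u %/ M = (Yc pos M c v %/ M).+1 by lia.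
  + by apply: (key w') => //; rewrite Ew' eu cu E addn0.
  + by apply: (key w) => //; rewrite Ew eu cu E addn0.
- have E : Yc pos M c u %/ M = (Yc pos M c v %/ M).+1 by lia.
  by apply: (key w) => //; rewrite Ew eu cu E addn0.
- have E : Yc pos M c u %/ M = Yc pos M c v %/ M by lia.
  by apply: (key w') => //; rewrite Ew' eu cu E addn0.
- lia.
Qed.

Lemma meetA (V : finType) (adj : rel V) pos q M c n :
  0 < M -> c <= M -> adjOK adj pos q -> injective pos -> injective q ->
  (forall w, pos w < n) -> (forall x, x < n -> exists w, pos w = x) ->
  (forall u v, adj u v -> pos u < pos v -> pos v < pos u + M) ->
  forall u v, adj u v ->
  lo adj pos M c u <= hi adj pos M c v /\ lo adj pos M c v <= hi adj pos M c u.
Proof.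
move=> M0 cM H ip iq bnd sur hbw u v.
wlog lt : u v / pos u < pos v.
  move=> W huv; case: (ltngtP (pos u) (pos v)) => h; first exact: W.
  - by have [] := W v u h; rewrite // (adj_symm H ip iq).
  - by move: huv; rewrite H (ip _ _ h) eqxx.
move=> huv.
have sym := adj_symm H ip iq.
have hb := hbw u v huv lt.
have Yuv : Yc pos M c u < Yc pos M c v < Yc pos M c u + M by rewrite /Yc; lia.
have eu := divn_eq (Yc pos M c u) M; have ev := divn_eq (Yc pos M c v) M.
have ru := ltn_pmod (Yc pos M c u) M0; have rv := ltn_pmod (Yc pos M c v) M0.
set tu := Yc pos M c u %/ M in eu *; set tv := Yc pos M c v %/ M in ev *.
have m1 := @mono1 M tu tv; have m2 := @mono1 M tv tu; have m3 := @mono1 M tu.+1 tv.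
rewrite mulSn in m3.
have m0 : tu = tv -> tu * M = tv * M by move=> ->.
rewrite /lo /hi -/tu -/tv.
case: eqP => cu; case: eqP => cv.
- lia.
- have E : tu = tv by lia.
  have -> : exL adj pos M c v.
    by apply/existsP; exists u; rewrite sym huv andbT -/tv -E eu cu addn0.
  by do ![case: ifP => _]; lia.
- have E : tv = tu.+1 by lia.
  have -> : exR adj pos M c u.
    by apply/existsP; exists v; rewrite huv andbT -/tu -E ev cv addn0.
  by do ![case: ifP => _]; lia.
- have [E|E] : tv = tu \/ tv = tu.+1 by lia.
  + by rewrite E; do ![case: ifP => _]; lia.
  + have [w hw] : exists w, pos w = tv * M + c - M.
      by apply: sur; have := bnd v; move: Yuv ev cv rv; rewrite /Yc; lia.
    have Yw : Yc pos M c w = tv * M by rewrite /Yc hw; rewrite E mulSn; lia.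
    have := between H ip iq (w:=w) (u:=u) (v:=v).
    have bt : pos u < pos w < pos v.
      have h1 : Yc pos M c u < tu * M + M by lia.
      have h2 : tu * M + M < Yc pos M c v by move: ev; rewrite E mulSn; lia.
      move: h1 h2; rewrite hw E mulSn /Yc; lia.
    case/(_ bt huv)/orP => aw.
    * have -> : exR adj pos M c u.
        by apply/existsP; exists w; rewrite aw andbT -/tu Yw E.
      by do ![case: ifP => _]; lia.
    * have -> : exL adj pos M c v.
        by apply/existsP; exists w; rewrite sym aw andbT -/tv Yw.
      by do ![case: ifP => _]; lia.
Qed.

Theorem theorem9 (V : finType) (adj : rel V) :
  is_permutation_graph adj -> boxicity_le adj (2 * max_degree adj + 1).
Proof.
case=> n [pi [f [fbij hadj]]].
set D := max_degree adj; set M := 2 * D + 1.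
pose pos u := nat_of_ord (f u).
pose q u := nat_of_ord ((pi^-1)%g (f u)).
have finj := bij_inj fbij.
have H : adjOK adj pos q.
  by move=> u v; rewrite hadj /perm_edge (inj_eq finj).
have ip : injective pos by move=> u v /val_inj /finj.
have iq : injective q by move=> u v /val_inj /perm_inj /finj.
have bnd : forall w, pos w < n by move=> w; exact: ltn_ord.
have sur : forall x, x < n -> exists w, pos w = x.
  case: fbij => g fK gK x hx; exists (g (Ordinal hx)); by rewrite /pos gK.
have deg : forall u, #|[set w | adj u w]| <= D.
  by move=> u; rewrite /D /max_degree; exact: (leq_bigmax (F := fun v => degree adj v) u).
have M0 : 0 < M by rewrite /M addn1.
have hbw : forall u v, adj u v -> pos u < pos v -> pos v < pos u + M.
  move=> u v huv lt; have := bandwidth H ip iq bnd sur deg huv lt; rewrite /M; lia.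
exists M; split; first by [].
exists (fun v (k : 'I_M) => (GRing.natmul (GRing.one R) (lo adj pos M k v), GRing.natmul (GRing.one R) (hi adj pos M k v))).
split.
  by move=> v k /=; rewrite ler_nat lo_hi.
move=> u v nuv; split.
  move=> huv; apply/forallP => k /=; rewrite !ler_nat.
  have [h1 h2] := meetA M0 (ltnW (ltn_ord k)) H ip iq bnd sur hbw huv.
  by rewrite h1 h2.
move/forallP => hk.
have c0 := ltn_pmod (pos u) M0.
have := hk (Ordinal c0); rewrite /= !ler_nat => /andP [h1 h2].
apply: (meetB M0 (ltnW c0) H ip iq _ nuv h1 h2).
rewrite /Yc {1}(divn_eq (pos u) M) -addnA (addnC _ M) addnA addnK -mulSnr.
exact: modnMl.
Qed.
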